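(* If $X$ is a set star Hurewicz space and $Y$ is a compact space, then $X \times Y$ is nearly set star Hurewicz.
   Context: For a subset $A$ of a space $X$ and a collection $\mathcal{U}$ of subsets of $X$, ${\rm St}(A,\mathcal{U}) = \bigcup\{U \in \mathcal{U}: U \cap A \neq \emptyset\}$. A space $X$ is set star Hurewicz if for each nonempty $A \subset X$ and each sequence $(\mathcal{U}_n: n\in\mathbb{N})$ of collections of sets open in $X$ with $\overline{A} \subset \bigcup\mathcal{U}_n$ for all $n$, there are finite $\mathcal{V}_n \subset \mathcal{U}_n$ such that each $x \in A$ lies in ${\rm St}(\bigcup\mathcal{V}_n,\mathcal{U}_n)$ for all but finitely many $n$. A space $Z$ is nearly set star Hurewicz if for each nonempty $A \subset Z$ and each sequence $(\mathcal{U}_n: n\in\mathbb{N})$ of open covers of $Z$ there are finite $\mathcal{V}_n \subset \mathcal{U}_n$ such that each $z \in A$ lies in ${\rm St}(\bigcup\mathcal{V}_n,\mathcal{U}_n)$ for all but finitely many $n$. *)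

(* Defs.v *)
From HB Require Import structures.
From mathcomp Require Import all_boot all_order all_algebra.
From mathcomp Require Import all_classical all_reals topology.
Set Implicit Arguments. Unset Strict Implicit. Unset Printing Implicit Defensive.
Local Open Scope classical_set_scope.

Definition St {T : Type} (A : set T) (U : set (set T)) : set T :=
  \bigcup_(V in [set V | U V /\ V `&` A !=set0]) V.

Definition set_star_Hurewicz (X : topologicalType) : Prop :=
  forall (A : set X), A !=set0 ->
  forall (U : nat -> set (set X)),
    (forall n V, U n V -> open V) ->
    (forall n, closure A `<=` \bigcup_(V in U n) V) ->
    exists Vs : nat -> set (set X),
      (forall n, finite_set (Vs n) /\ Vs n `<=` U n) /\
      (forall x, A x -> exists N : nat, forall n : nat, (N <= n)%N ->
          St (\bigcup_(V in Vs n) V) (U n) x).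

Definition nearly_set_star_Hurewicz (Z : topologicalType) : Prop :=
  forall (A : set Z), A !=set0 ->
  forall (U : nat -> set (set Z)),
    (forall n V, U n V -> open V) ->
    (forall n, \bigcup_(V in U n) V = setT) ->
    exists Vs : nat -> set (set Z),
      (forall n, finite_set (Vs n) /\ Vs n `<=` U n) /\
      (forall z, A z -> exists N : nat, forall n : nat, (N <= n)%N ->
          St (\bigcup_(V in Vs n) V) (U n) z).

(* Main.v *)
From HB Require Import structures.
Require Import Defs.
From mathcomp Require Import all_boot all_order all_algebra.
From mathcomp Require Import all_classical all_reals topology.
From mathcomp Require Import finmap.
Local Open Scope classical_set_scope.

Lemma cc (Y : topologicalType) (y0 : Y) : compact [set: Y] -> @cover_compact Y [set: Y].
Proof.
move=> cY.
pose Yp : ptopologicalType := HB.pack (Topological.sort Y) (isPointed.Build Y y0).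
have : compact [set: Yp] by exact: cY.
rewrite compact_cover.
exact.
Qed.

Lemma key (X Y : topologicalType) (y0 : Y) : compact [set: Y] ->
  forall (U : set (set (X * Y)%type)), (forall V, U V -> open V) ->
  \bigcup_(V in U) V = setT -> forall x : X,
  exists D' : {fset set (X * Y)%type}, (forall V, V \in D' -> U V) /\
    exists W : set X, open W /\ W x /\ (forall x', W x' ->
      (forall y, exists2 V, V \in D' & V (x', y)) /\
      (forall V, V \in D' -> exists y, V (x', y))).
Proof.
move=> cY U Uo Ucov x.
pose D := [set V | U V /\ exists y, V (x, y)].
pose f := fun V : set (X * Y)%type => [set y | V (x, y)].
have fo : forall V, D V -> open (f V).
  move=> V [UV _]; rewrite openE => y /= Vxy.
  have : nbhs (x, y) V by apply: open_nbhs_nbhs; split => //; exact: Uo.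
  case=> [[A B]] /= [nA nB] AB.
  apply: filterS nB => y' By'; exact: (AB (x, y')) (conj (nbhs_singleton nA) By').
have cov : [set: Y] `<=` cover D f.
  move=> y _; have : (\bigcup_(V in U) V) (x, y) by rewrite Ucov.
  case=> V UV Vxy; exists V => //; split => //; by exists y.
have cY' := @cc Y y0 cY.
have [D' D'D covD'] := cY' _ D f fo cov.
have hD : forall V, V \in D' -> D V by move=> V /D'D /set_mem.
exists D'; split; first by move=> V /hD [].
have T1 : \forall x' \near x, forall y, exists2 V, V \in D' & V (x', y).
  have H : \forall x' \near x, [set: Y] `<=` (fun y => exists2 V, V \in D' & V (x', y)).
    apply: (proj1 (compact_near_coveringP _) cY X (nbhs x)
      (fun x' y => exists2 V, V \in D' & V (x', y))).
    move=> y _; have [V VD' Vxy] := covD' y I.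
    have : nbhs (x, y) V.
      by apply: open_nbhs_nbhs; split => //; apply: Uo; have [] := hD _ VD'.
    case=> [[A B]] /= [nA nB] AB.
    exists (B, A) => //= -[y' i] [/= By' Ai]; exists V => //.
    exact: (AB (i, y')) (conj Ai By').
  by apply: filterS H => x' H y; exact: H y I.
have T2 : \forall x' \near x, forall V, V \in D' -> exists y, V (x', y).
  have H : nbhs x (\bigcap_(V in [set` D']) [set x' | exists y, V (x', y)]).
    apply: filter_bigI => V VD'; have [UV [y1 Vxy0]] := hD _ VD'.
    have : nbhs (x, y1) V by apply: open_nbhs_nbhs; split => //; exact: Uo.
    case=> [[A B]] /= [nA nB] AB.
    apply: filterS nA => x' Ax'; exists y1; exact: (AB (x', y1)) (conj Ax' (nbhs_singleton nB)).
  by apply: filterS H => x' H V VD'; exact: H V VD'.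
have [W [Wo Wx] WS] := eq_ind _ (fun G : set_system X => G (_ `&` _)) (filterI T1 T2) _ (nbhsE x).
by exists W; split => //; split => // x' /WS.
Qed.

Theorem corollary3p16 (X Y : topologicalType) :
  set_star_Hurewicz X -> compact [set: Y] ->
  nearly_set_star_Hurewicz (X * Y)%type.
Proof.
move=> HX cY A [[a0 b0] Aab] U Uo Ucov.
have K : forall nx : nat * X, exists D' : {fset set (X * Y)%type},
  (forall V, V \in D' -> U nx.1 V) /\
    exists W : set X, open W /\ W nx.2 /\ (forall x', W x' ->
      (forall y, exists2 V, V \in D' & V (x', y)) /\
      (forall V, V \in D' -> exists y, V (x', y))).
  by move=> [n x]; exact (@key X Y b0 cY (U n) (Uo n) (Ucov n) x).
have [g Hg] := choice K.
have [Wf HW] := choice (fun nx => proj2 (Hg nx)).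
pose W n x := Wf (n, x).
pose WU n := [set W n x | x in [set: X]].
have Hp : forall nV : nat * set X, exists x : X,
    (exists x, W nV.1 x = nV.2) -> W nV.1 x = nV.2.
  move=> [n V] /=.
  have [[x Hx]|nex] := pselect (exists x, W n x = V).
    by exists x.
  by exists a0 => h; exfalso; exact: nex.
have [pk Hpk] := choice Hp.
pose B := fst @` A.
have B0 : B !=set0 by exists a0; exists (a0, b0).
have WUo : forall n V, WU n V -> open V.
  by move=> n V [x _ <-]; have [] := HW (n, x).
have WUc : forall n, closure B `<=` \bigcup_(V in WU n) V.
  move=> n x _; exists (W n x); first by exists x.
  by have [_ []] := HW (n, x).
have [Vs [HVs Hst]] := HX B B0 WU WUo WUc.
exists (fun n => \bigcup_(V in Vs n) [set` g (n, pk (n, V))]); split.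
  move=> n; split.
    apply: bigcup_finite; first exact: (HVs n).1.
    by move=> V _; exact: finite_fset.
  by move=> V' [V _ /= V'g]; exact: (Hg (n, pk (n, V))).1.
move=> [zx zy] Az.
have [N HN] := Hst zx (ex_intro2 _ _ (zx, zy) Az erefl).
exists N => n Nn.
have [V0 [[x1 _ <-] [x2 [W1x2 [V1 Vs1 V1x2]]]] W1zx] := HN n Nn.
have V1U : WU n V1 by exact: (HVs n).2.
have eV1 : W n (pk (n, V1)) = V1.
  by apply: (Hpk (n, V1)); case: V1U => x _ <-; exists x.
have [_ [_ HW1]] := HW (n, x1).
have [U1 U1g U1z] := (HW1 zx W1zx).1 zy.
have [y2 U1x2] := (HW1 x2 W1x2).2 U1 U1g.
have [_ [_ HW2]] := HW (n, pk (n, V1)).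
have W2x2 : Wf (n, pk (n, V1)) x2.
  by have -> : Wf (n, pk (n, V1)) = V1 by exact: eV1.
have [U2 U2g U2x] := (HW2 x2 W2x2).1 y2.
exists U1 => //; split; first exact: (Hg (n, x1)).1.
exists (x2, y2); split => //.
exists U2 => //; exists V1 => //.
Qed.
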